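(* In the standing setting below, assume $c$ satisfies Loeper's property. Let $x'\in\mathbb{X}$, $y_0,y_1\in\mathbb{Y}$ with $y_0\ne y_1$, $f_i(x)=-c(x,y_i)+c(x',y_i)$ for $i=0,1$, and $S=\{x\in\mathbb{X}:f_0(x)\le f_1(x)\}$. Then $S$ is $c$-convex with respect to $y_1$, i.e. the set $\{-D_yc(x,y_1):x\in S\}$ is convex.
   Context: Standing setting: $\mathbb{X},\mathbb{Y}\subset\mathbb{R}^n$ are compact with non-empty interior; $c:\mathbb{X}\times\mathbb{Y}\to\mathbb{R}$ has continuous $D_xc$, $D_yc$, and continuous mixed second derivatives with $D^2_{xy}c=(D^2_{yx}c)^T$; for each $x$ the map $y\mapsto -D_xc(x,y)$ is injective on $\mathbb{Y}$ and for each $y$ the map $x\mapsto -D_yc(x,y)$ is injective on $\mathbb{X}$; $D^2_{xy}c(x,y)$ is invertible everywhere; for every $y$ the set $[\mathbb{X}]_y=\{-D_yc(x,y):x\in\mathbb{X}\}$ is convex and for every $x$ the set $\{-D_xc(x,y):y\in\mathbb{Y}\}$ is convex. $\exp^c_y:[\mathbb{X}]_y\to\mathbb{X}$ is the inverse of $x\mapsto -D_yc(x,y)$; for $x_0,x_1\in\mathbb{X}$, $y\in\mathbb{Y}$, $p_i=-D_yc(x_i,y)$, the $c$-segment with respect to $y$ from $x_0$ to $x_1$ is $\{x_t=\exp^c_y(tp_1+(1-t)p_0):t\in[0,1]\}$. Loeper's property: for all $x_0,x_1\in\mathbb{X}$, $y_0,y\in\mathbb{Y}$ and every $x_t$ on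 the $c$-segment with respect to $y_0$ from $x_0$ to $x_1$, $-c(x_t,y)+c(x_t,y_0)\le\max\{-c(x_i,y)+c(x_i,y_0):i=0,1\}$. *)

(* Defs.v *)
From HB Require Import structures.
From mathcomp Require Import all_boot all_order all_algebra.
From mathcomp Require Import all_classical all_reals all_analysis.
Set Implicit Arguments. Unset Strict Implicit. Unset Printing Implicit Defensive.
Import Order.TTheory GRing.Theory Num.Theory.
Import numFieldNormedType.Exports.
Local Open Scope classical_set_scope.
Local Open Scope ring_scope.

(* Points of R^n are row vectors 'rV[R]_n; a cost is c : 'rV_n -> 'rV_n -> R
   (defined on all of R^n x R^n, only its behaviour near X x Y matters). *)

Definition ev {R : realType} {n : nat} (i : 'I_n) : 'rV[R]_n := delta_mx 0 i.

Definition Dx {R : realType} {n : nat} (c : 'rV[R]_n -> 'rV[R]_n -> R)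
  (x y : 'rV[R]_n) : 'rV[R]_n :=
  \row_i ('D_(ev i) (fun z => c z y) x).

Definition Dy {R : realType} {n : nat} (c : 'rV[R]_n -> 'rV[R]_n -> R)
  (x y : 'rV[R]_n) : 'rV[R]_n :=
  \row_i ('D_(ev i) (fun z => c x z) y).

Definition Dxy {R : realType} {n : nat} (c : 'rV[R]_n -> 'rV[R]_n -> R)
  (x y : 'rV[R]_n) : 'M[R]_n :=
  \matrix_(i, j) ('D_(ev j) (fun z => Dx c x z 0 i) y).

Definition Dyx {R : realType} {n : nat} (c : 'rV[R]_n -> 'rV[R]_n -> R)
  (x y : 'rV[R]_n) : 'M[R]_n :=
  \matrix_(i, j) ('D_(ev j) (fun z => Dy c z y 0 i) x).

Definition standing_setting {R : realType} {n : nat}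
  (X Y : set 'rV[R]_n) (c : 'rV[R]_n -> 'rV[R]_n -> R) : Prop :=
  (compact X /\ compact Y) /\
  ((X° !=set0) /\ (Y° !=set0)) /\
  (forall x y, X x -> Y y -> differentiable (fun z => c z y) x /\
                             differentiable (fun z => c x z) y) /\
  ({within X `*` Y, continuous (fun p : 'rV[R]_n * 'rV[R]_n => Dx c p.1 p.2)}) /\
  ({within X `*` Y, continuous (fun p : 'rV[R]_n * 'rV[R]_n => Dy c p.1 p.2)}) /\
  (forall x y, X x -> Y y ->
     differentiable (fun z => Dx c x z) y /\ differentiable (fun z => Dy c z y) x) /\
  ({within X `*` Y, continuous (fun p : 'rV[R]_n * 'rV[R]_n => Dxy c p.1 p.2)}) /\
  ({within X `*` Y, continuous (fun p : 'rV[R]_n * 'rV[R]_n => Dyx c p.1 p.2)}) /\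
  (forall x y, X x -> Y y -> Dxy c x y = trmx (Dyx c x y)) /\
  (forall x, X x -> {in Y &, injective (fun y => - Dx c x y)}) /\
  (forall y, Y y -> {in X &, injective (fun x => - Dy c x y)}) /\
  (forall x y, X x -> Y y -> Dxy c x y \in unitmx) /\
  (forall y, Y y -> convex_set [set - Dy c x y | x in X]) /\
  (forall x, X x -> convex_set [set - Dx c x y | y in Y]).

(* xt lies on the c-segment with respect to y from x0 to x1, i.e.
   xt = exp^c_y(t p1 + (1-t) p0) for some t in [0,1], where p_i = -D_y c(x_i,y);
   exp^c_y is the inverse of x |-> -D_y c(x,y) on X, so xt = exp^c_y(p) means
   xt \in X and -D_y c(xt,y) = p. *)
Definition on_c_segment {R : realType} {n : nat}
  (X : set 'rV[R]_n) (c : 'rV[R]_n -> 'rV[R]_n -> R) (y x0 x1 xt : 'rV[R]_n) : Prop :=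
  exists t : R, [/\ 0 <= t <= 1, X xt &
    - Dy c xt y = t *: (- Dy c x1 y) + (1 - t) *: (- Dy c x0 y)].

Definition loeper_property {R : realType} {n : nat}
  (X Y : set 'rV[R]_n) (c : 'rV[R]_n -> 'rV[R]_n -> R) : Prop :=
  forall x0 x1 y0 y xt, X x0 -> X x1 -> Y y0 -> Y y ->
    on_c_segment X c y0 x0 x1 xt ->
    - c xt y + c xt y0 <= Num.max (- c x0 y + c x0 y0) (- c x1 y + c x1 y0).

(* Main.v *)
Require Import Defs.
From HB Require Import structures.
From mathcomp Require Import all_boot all_order all_algebra.
From mathcomp Require Import all_classical all_reals all_analysis.
From mathcomp Require Import lra.
Import Order.TTheory GRing.Theory Num.Theory.
Import numFieldNormedType.Exports.
Local Open Scope classical_set_scope.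
Local Open Scope ring_scope.

Theorem lemma2p24 (R : realType) (n : nat) (X Y : set 'rV[R]_n)
  (c : 'rV[R]_n -> 'rV[R]_n -> R) :
  standing_setting X Y c -> loeper_property X Y c ->
  forall (x' y0 y1 : 'rV[R]_n), X x' -> Y y0 -> Y y1 -> y0 <> y1 ->
  let f0 := fun x => - c x y0 + c x' y0 in
  let f1 := fun x => - c x y1 + c x' y1 in
  let S := [set x | X x /\ f0 x <= f1 x] in
  convex_set [set - Dy c x y1 | x in S].
Proof.
move=> Hs HL x' y0 y1 Xx' Y0 Y1 _ f0 f1 S p q l.
rewrite !inE => -[a [Xa Sa] <-] [b [Xb Sb] <-].
have Hcv := Hs.2.2.2.2.2.2.2.2.2.2.2.2.1 y1 Y1.
have := Hcv (- Dy c a y1) (- Dy c b y1) l.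
rewrite !inE => /(_ (ex_intro2 _ _ a Xa erefl) (ex_intro2 _ _ b Xb erefl)).
move=> [xt Xxt Ext]; exists xt => //; split => //.
have seg : on_c_segment X c y1 b a xt.
  by exists (l%:inum); split => //; apply/andP; split.
have := HL b a y1 y0 xt Xb Xa Y1 Y0 seg.
move: Sa Sb; rewrite /f0 /f1 => Sa Sb.
rewrite /f0 /f1 le_max => /orP [] H.
  move: Sb H; clear; generalize (c xt y0) (c xt y1) (c b y0) (c b y1) (c x' y0) (c x' y1).
  move=> r1 r2 r3 r4 r5 r6; lra.
move: Sa H; clear; generalize (c xt y0) (c xt y1) (c a y0) (c a y1) (c x' y0) (c x' y1).
move=> r1 r2 r3 r4 r5 r6; lra.
Qed.
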